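(* Any finite group that has a nontrivial quotient of odd order is not mixable.
   Context: For a finite group $G$, a random subproduct is a random element $g_1^{\epsilon_1}\cdots g_k^{\epsilon_k}$ where $g_1,\dots,g_k\in G$ are fixed and $\epsilon_1,\dots,\epsilon_k$ are independent Bernoulli random variables with $\epsilon_i\sim\mathrm{Ber}(p_i)$, $p_i\in[0,1]$. $G$ is called mixable if some random subproduct is distributed exactly uniformly on $G$. *)

(* Defs.v *)
From HB Require Import structures.
From mathcomp Require Import all_boot all_order all_algebra all_fingroup.
From mathcomp Require Import reals.
Set Implicit Arguments. Unset Strict Implicit. Unset Printing Implicit Defensive.
Import GRing.Theory Num.Theory.

Local Open Scope ring_scope.

Definition subprod (gT : finGroupType) (k : nat) (g : 'I_k -> gT)
  (e : {ffun 'I_k -> bool}) : gT :=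
  (\prod_(i < k) (if e i then g i else 1))%g.

(* Probability that the random subproduct, with independent
   e_i ~ Ber(p_i), equals x. *)
Definition subprod_prob (R : realType) (gT : finGroupType) (k : nat)
  (g : 'I_k -> gT) (p : 'I_k -> R) (x : gT) : R :=
  \sum_(e : {ffun 'I_k -> bool} | subprod g e == x)
     \prod_(i < k) (if e i then p i else 1 - p i).

Definition mixable (R : realType) (gT : finGroupType) (G : {group gT}) : Prop :=
  exists (k : nat) (g : 'I_k -> gT) (p : 'I_k -> R),
    [/\ forall i, g i \in G,
        forall i, 0 <= p i <= 1
      & forall x, x \in G -> subprod_prob g p x = #|G|%:R^-1].

(* Main.v *)
Require Import Defs.
From HB Require Import structures.
From mathcomp Require Import all_boot all_order all_algebra all_fingroup.
From mathcomp Require Import reals cyclic.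
Set Implicit Arguments. Unset Strict Implicit. Unset Printing Implicit Defensive.
Import GRing.Theory Num.Theory.

Section Helpers.
Local Open Scope ring_scope.

Lemma odd_cycle_zero (R : realType) (qT : finGroupType) (Q : {group qT})
  (q : qT) (b : qT -> R) (p : R) :
  q \in Q -> odd #|Q| -> 0 <= p <= 1 ->
  (forall X, X \in Q -> (1 - p) * b X + p * b (X * q^-1)%g = 0) ->
  forall X, X \in Q -> b X = 0.
Proof.
move=> qQ oQ /andP[p0 p1] E.
have p10 : 0 <= 1 - p by rewrite subr_ge0.
have Eabs : forall X, X \in Q -> (1 - p) * `|b X| = p * `|b (X * q^-1)%g|.
  move=> X XQ; have := E X XQ; move/eqP; rewrite addr_eq0 => /eqP H.
  by rewrite -[1 - p]ger0_norm // -normrM H normrN normrM ger0_norm.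
set S := \sum_(X in Q) `|b X|.
have S' : \sum_(X in Q) `|b (X * q^-1)%g| = S.
  rewrite /S (reindex_inj (mulIg q)%g) /=; apply: eq_big => X; rewrite ?mulgK //.
  by rewrite groupMr.
have ES : (1 - p) * S = p * S.
  rewrite {1}/S mulr_sumr -S' mulr_sumr; apply: eq_bigr => X XQ; exact: Eabs.
have [S0|Sn0] := eqVneq S 0.
  move=> X XQ; apply/normr0_eq0.
  by apply: (psumr_eq0P _ S0) => //= Y _; rewrite normr_ge0.
have ph : p = 1 - p by apply/(mulIf Sn0).
have Eneg : forall X, X \in Q -> b (X * q^-1)%g = - b X.
  move=> X XQ; have := E X XQ; rewrite -ph -mulrDr => /eqP.
  rewrite mulf_eq0 => /orP[/eqP p00|]; first by move: ph; rewrite p00 subr0 => /eqP; rewrite eq_sym oner_eq0.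
  by rewrite addr_eq0 => /eqP ->; rewrite opprK.
have En : forall n X, X \in Q -> b (X * (q ^+ n)^-1)%g = (-1) ^+ n * b X.
  elim=> [|n IH] X XQ; first by rewrite expg0 invg1 mulg1 expr0 mul1r.
  rewrite expgS invMg mulgA Eneg; last by rewrite groupM // groupV groupX.
  by rewrite IH // exprS mulN1r mulNr.
move=> X XQ; have := En #|Q| X XQ.
rewrite expg_cardG // invg1 mulg1 -signr_odd oQ expr1 mulN1r => /eqP.
by rewrite -addr_eq0 -mulr2n mulrn_eq0 /= => /eqP.
Qed.

Section Step.
Variables (R : realType) (gT : finGroupType) (H : {group gT}).

Definition Fq k (g : 'I_k -> gT) (p : 'I_k -> R) (X : coset_of H) : R :=
  \sum_(e : {ffun 'I_k -> bool} | coset H (subprod g e) == X)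
     \prod_(i < k) (if e i then p i else 1 - p i).

Definition ext k (eb : {ffun 'I_k -> bool} * bool) : {ffun 'I_k.+1 -> bool} :=
  [ffun i => if unlift ord_max i is Some j then eb.1 j else eb.2].

Definition rst k (e : {ffun 'I_k.+1 -> bool}) : {ffun 'I_k -> bool} * bool :=
  ([ffun j => e (lift ord_max j)], e ord_max).

Lemma ext_widen k eb (j : 'I_k) : ext eb (widen_ord (leqnSn k) j) = eb.1 j.
Proof.
have -> : widen_ord (leqnSn k) j = lift ord_max j by apply: val_inj; exact: (esym (lift_max j)).
by rewrite ffunE liftK.
Qed.

Lemma ext_max k eb : ext eb (@ord_max k) = eb.2.
Proof. by rewrite ffunE unlift_none. Qed.

Lemma Fq_step k (g : 'I_k.+1 -> gT) (p : 'I_k.+1 -> R) X :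
  (forall i, g i \in 'N(H)%g) ->
  Fq g p X =
  (1 - p ord_max) * Fq (fun i => g (widen_ord (leqnSn k) i)) (fun i => p (widen_ord (leqnSn k) i)) X
  + p ord_max * Fq (fun i => g (widen_ord (leqnSn k) i)) (fun i => p (widen_ord (leqnSn k) i))
        (X * (coset H (g ord_max))^-1)%g.
Proof.
move=> gN.
rewrite /Fq big_mkcond (reindex (@ext k)) /=; last first.
  exists (@rst k) => [[e b] _ | e _].
    by rewrite /rst ext_max; congr pair; apply/ffunP => j; rewrite ffunE /ext ffunE liftK.
  apply/ffunP => i; rewrite ffunE /=; case: unliftP => [j ->|->] /=.
    by rewrite ffunE. by [].
rewrite -(pair_bigA _ (fun e b => if coset H (subprod g (ext (e, b))) == X then
   \prod_(i < k.+1) (if ext (e, b) i then p i else 1 - p i) else 0)) /=.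
rewrite !mulr_sumr [X in _ = X + _]big_mkcond [X in _ = _ + X]big_mkcond /= -big_split /=; apply: eq_bigr => e _.
rewrite big_bool /= addrC.
have sN : (subprod (fun i => g (widen_ord (leqnSn k) i)) e \in 'N(H))%g.
  by apply: group_prod => i _; case: (e i).
have Ep : forall b, subprod g (ext (e, b)) =
   (subprod (fun i => g (widen_ord (leqnSn k) i)) e * if b then g ord_max else 1)%g.
  move=> b; rewrite /subprod big_ord_recr /= ext_max /=; congr (_ * _)%g.
  by apply: eq_bigr => i _; rewrite ext_widen.
have Ew : forall b, \prod_(i < k.+1) (if ext (e, b) i then p i else 1 - p i) =
   (\prod_(i < k) (if e i then p (widen_ord (leqnSn k) i) else 1 - p (widen_ord (leqnSn k) i)))
   * (if b then p ord_max else 1 - p ord_max).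
  move=> b; rewrite big_ord_recr /= ext_max; congr (_ * _).
  by apply: eq_bigr => i _; rewrite ext_widen.
rewrite !Ep !Ew (morphM _ sN) ?gN // morph1 mulg1.
congr (_ + _).
  by rewrite [_ * (1 - _)]mulrC.
rewrite (morphM _ sN) ?gN //.
have -> : (coset H (subprod (fun i => g (widen_ord (leqnSn k) i)) e) * coset H (g ord_max) == X)%g
   = (coset H (subprod (fun i => g (widen_ord (leqnSn k) i)) e) == X * (coset H (g ord_max))^-1)%g.
  by apply/eqP/eqP => [<-|->]; rewrite ?mulgK ?mulgKV.
by rewrite [_ * p _]mulrC.
Qed.

End Step.
Lemma notconst (R : realType) (gT : finGroupType) (G H : {group gT}) :
  (H <| G)%g -> (1 < #|(G / H)%g|)%N -> odd #|(G / H)%g| ->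
  forall k (g : 'I_k -> gT) (p : 'I_k -> R),
  (forall i, g i \in G) -> (forall i, 0 <= p i <= 1) ->
  forall c, ~ (forall X, X \in (G / H)%g -> Fq g p X = c).
Proof.
move=> nHG Q1 oQ; have GN : G \subset 'N(H)%g by apply: normal_norm.
elim=> [|k IH] g p gG p01 c Ec.
  have F0 : forall X : coset_of H, Fq g p X = if X == 1%g then 1 else 0.
    move=> X; rewrite /Fq.
    rewrite (eq_bigl (fun _ => coset H 1 == X)); last by move=> e; rewrite /subprod big_ord0.
    under eq_bigr do rewrite big_ord0.
    rewrite morph1 eq_sym; case: eqP => _.
      by rewrite sumr_const card_ffun card_ord expn0.
    by rewrite big_pred0_eq.
  have : (G / H)%g != 1%g :> {set _} by rewrite trivg_card1 neq_ltn Q1 orbT.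
  case/trivgPn => X XQ Xn1.
  have := Ec X XQ; have := Ec 1%g (group1 _); rewrite !F0 eqxx (negbTE Xn1) => <- /eqP.
  by rewrite eq_sym oner_eq0.
pose g' := fun i : 'I_k => g (widen_ord (leqnSn k) i).
pose p' := fun i : 'I_k => p (widen_ord (leqnSn k) i).
apply: (IH g' p' (fun i => gG _) (fun i => p01 _) c).
have qQ : coset H (g ord_max) \in (G / H)%g by apply: mem_quotient.
have := @odd_cycle_zero R _ (G / H)%g (coset H (g ord_max)) (fun X => Fq g' p' X - c) (p ord_max) qQ oQ (p01 _).
move=> Z X XQ; apply/eqP; rewrite -subr_eq0; apply/eqP; apply: Z => // Y YQ.
have := Ec Y YQ; rewrite Fq_step; last by move=> i; apply: (subsetP GN).
rewrite /g' /p' => E /=; rewrite !mulrBr addrACA E -opprD -mulrDl subrK mul1r subrr //.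
Qed.
End Helpers.

Theorem mainTheorem2 (R : realType) (gT : finGroupType) (G : {group gT}) :
  (exists H : {group gT}, [/\ (H <| G)%g, (1 < #|(G / H)%g|)%N & odd #|(G / H)%g|]) ->
  ~ mixable R G.
Proof.
move=> [H [nHG Q1 oQ]] [k [g [p [gG p01 unif]]]].
have GN : G \subset 'N(H)%g by apply: normal_norm.
apply: (notconst nHG Q1 oQ gG p01 (c := (#|H|%:R / #|G|%:R)%R)) => X XQ.
rewrite /Fq (partition_big (subprod g) (fun y => coset H y == X)) //=.
rewrite (eq_bigr (fun y => if y \in G then (#|G|%:R^-1)%R else 0%R)); last first.
  move=> y /eqP Hy; case: ifP => yG.
    rewrite -(unif y yG); apply: eq_bigl => e /=.
    by case: (subprod g e =P y) => [->|]; rewrite ?andbT ?andbF // Hy eqxx.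
  apply: big1 => e /andP[_ /eqP se]; case/negP: yG; rewrite -se.
  by apply: group_prod => i _; case: (e i) => //; exact: group1.
rewrite -big_mkcondr sumr_const.
have -> : #|[pred y | (coset H y == X) && (y \in G)]| = #|H|.
  case/morphimP: XQ => x xN xG ->.
  rewrite -(card_rcoset H x); apply: eq_card => y; rewrite inE /=.
  apply/andP/idP => [[/eqP e yG] | yHx].
    have yN : y \in 'N(H)%g := subsetP GN y yG.
    have : y \in (coset H y : {set gT}) by rewrite val_coset // rcoset_refl.
    by rewrite e val_coset.
  case/rcosetP: yHx => h hH ->; split.
    apply/eqP; apply: coset_mem; rewrite val_coset //; apply/rcosetP; by exists h.
  by rewrite groupM // (subsetP (normal_sub nHG)).
by rewrite -(mulr_natl (#|G|%:R^-1)%R).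
Qed.
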